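(* $\{M^{(1)}_n\}$ and $\{M^{(2)}_n\}$ are martingale difference sequences with respect to the increasing $\sigma$-fields $\mathcal F_n:=\sigma(x_m,y_m,M^{(1)}_{m},M^{(2)}_{m},m\le n)$, $n\ge0$, and there exist constants $K^{(1)},K^{(2)}>0$ such that for all $n\ge0$: $\mathbb E[\|M^{(1)}_{n+1}\|_2^2\mid\mathcal F_n]\le K^{(1)}(1+\|x_n\|_2^2+\|y_n\|_2^2)$ and $\mathbb E[\|M^{(2)}_{n+1}\|_2^2\mid\mathcal F_n]\le K^{(2)}(1+\|x_n\|_2^2+\|y_n\|_2^2)$.
   Context: $\mathcal S,\mathcal A$ finite, $P$ a transition kernel, $r$ a reward with $|r|\le\bar r$, $T\ge1$, $\Omega=\mathcal S$, $\mathcal S^{\mathrm{de}}=\{0,\dots,T-1\}$ with cyclic deterministic kernel $P^{\mathrm{de}}$, $\mathcal S^{\mathrm h}=\mathcal S$, $\mathcal S^{\mathrm l}=\mathcal S\times\Omega\times\mathcal S^{\mathrm{de}}$, bounded $r^{\mathrm l}$, $\gamma^{\mathrm h},\gamma^{\mathrm l}\in(0,1)$. High-level kernel $P^{\mathrm h}_{\pi^{\mathrm l}}(s'|s,\omega)=\sum_{s_1..s_{T-1},a_0..a_{T-1}}\prod_{i=1}^TP(s_i|s_{i-1},a_{i-1})\pi^{\mathrm l}(a_{i-1}|(s_{i-1},\omega,i-1))$ ($s_0=s,s_T=s'$), high-level reward $r^{\mathrm h}_{\pi^{\mathrm l}}(s,\omega)=\mathbb E[\sum_{k=0}^{T-1}(\gamma^{\mathrm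 h})^kr(s_k,a_k)|s_0=s]$ with $a_k\sim\pi^{\mathrm l}(\cdot|(s_k,\omega,k))$; low-level kernel $P^{\mathrm l}_{\pi^{\mathrm h}}((s',\omega',d')|(s,\omega,d),a)=P^{\mathrm{de}}(d'|d)P(s'|s,a)q$, $q=0$ if $d\ne T-1,\omega'\ne\omega$; $q=1$ if $d\ne T-1,\omega'=\omega$; $q=\pi^{\mathrm h}(\omega'|s)$ if $d=T-1$. Feudal Q-learning iterates $Q^{\mathrm h,n}$, $Q^{\mathrm l,n}$ are written as $y_n=\mathrm{vec}(Q^{\mathrm h,n})$, $x_n=\mathrm{vec}(Q^{\mathrm l,n})$ and updated from on-policy samples generated with $\pi^{\mathrm h}=\pi^{\mathrm h,n}$, $\pi^{\mathrm l}=\pi^{\mathrm l,n}$ (policies determined by the current iterates). The noise terms are vectors with components $M^{(1)}_{n+1,s^{\mathrm l},a}=\gamma^{\mathrm l}\max_{a'}Q^{\mathrm l,n}(s^{\mathrm l}_{k+1},a')-\gamma^{\mathrm l}\mathbb E_{s^{\mathrm l,+}\sim P^{\mathrm l}_{\pi^{\mathrm h}}(\cdot|s^{\mathrm l},a)}[\max_{a^+}Q^{\mathrm l,n}(s^{\mathrm l,+},a^+)]$, with $s^{\mathrm l}_{k+1}\sim P^{\mathrm l}_{\pi^{\mathrm h}}(\cdot|s^{\mathrm l},a)$, and $M^{(2)}_{n+1,s^{\mathrm h},\omega}=(\gamma^{\mathrm h})^T\max_{\omega'}Q^{\mathrm h,n}(s^{\mathrm h}_{t+1},\omega')-(\gamma^{\mathrm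 h})^T\mathbb E_{s^{\mathrm h,+}\sim P^{\mathrm h}_{\pi^{\mathrm l}}(\cdot|s^{\mathrm h},\omega)}[\max_{\omega^+}Q^{\mathrm h,n}(s^{\mathrm h,+},\omega^+)]+\sum_{k=0}^{T-1}(\gamma^{\mathrm h})^kr(s_{tT+k},a_{tT+k})-r^{\mathrm h}_{\pi^{\mathrm l}}(s^{\mathrm h},\omega)$, where the sampled segment starts at $s_{tT}=s^{\mathrm h}$ with goal $\omega$, $a_{tT+k}\sim\pi^{\mathrm l}(\cdot|s^{\mathrm l}_{tT+k})$, $s^{\mathrm l}_{tT+k+1}\sim P^{\mathrm l}_{\pi^{\mathrm h}}(\cdot|s^{\mathrm l}_{tT+k},a_{tT+k})$, and $s^{\mathrm h}_{t+1}=s_{(t+1)T}$. *)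

(* Defs.v *)
From HB Require Import structures.
From mathcomp Require Import all_boot all_order all_algebra.
From mathcomp Require Import all_classical all_reals all_analysis.
Set Implicit Arguments. Unset Strict Implicit. Unset Printing Implicit Defensive.
Import Order.TTheory GRing.Theory Num.Theory.
Local Open Scope classical_set_scope.
Local Open Scope ring_scope.

Definition maxQ {R : realType} {X B : finType} (Q : X -> B -> R) (x : X) : R :=
  match enum B with
  | [::] => 0
  | b :: _ => \big[Num.max/Q x b]_(b' : B) Q x b'
  end.

(* Low-level state space  S^l = S x Omega x S^de, with Omega = S, S^de = 'I_T *)
Definition SL (S : finType) (T : nat) : finType := (S * S * 'I_T)%type.

Definition Pde {R : realType} (T : nat) (d d' : 'I_T) : R :=
  ((d' : nat) == (d.+1 %% T)%N)%:R.

(* low-level kernel P^l_{pi^h}((s',w',d') | (s,w,d), a);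
   pih s w' = pi^h(w' | s) *)
Definition Pl {R : realType} {S A : finType} (T : nat)
  (P : S -> A -> S -> R) (pih : S -> S -> R)
  (x : SL S T) (a : A) (y : SL S T) : R :=
  let: (s, w, d) := x in
  let: (s', w', d') := y in
  Pde d d' * P s a s' *
  (if (d : nat) != T.-1 then (w' == w)%:R else pih s w').

Definition seg_weight {R : realType} {S A : finType} (T : nat)
  (P : S -> A -> S -> R) (pil : SL S T -> A -> R) (s w : S)
  (st : {ffun 'I_T.+1 -> S}) (ac : {ffun 'I_T -> A}) : R :=
  (st ord0 == s)%:R *
  \prod_(i < T) (P (st (inord i)) (ac i) (st (inord i.+1)) *
                 pil (st (inord i), w, i) (ac i)).

Definition seg_reward {R : realType} {S A : finType} (T : nat)
  (r : S -> A -> R) (gh : R)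
  (st : {ffun 'I_T.+1 -> S}) (ac : {ffun 'I_T -> A}) : R :=
  \sum_(k < T) gh ^+ k * r (st (inord k)) (ac k).

Definition Ph {R : realType} {S A : finType} (T : nat)
  (P : S -> A -> S -> R) (pil : SL S T -> A -> R) (s w s' : S) : R :=
  \sum_(st : {ffun 'I_T.+1 -> S}) \sum_(ac : {ffun 'I_T -> A})
    seg_weight P pil s w st ac * (st (inord T) == s')%:R.

Definition rh {R : realType} {S A : finType} (T : nat)
  (P : S -> A -> S -> R) (r : S -> A -> R) (gh : R)
  (pil : SL S T -> A -> R) (s w : S) : R :=
  \sum_(st : {ffun 'I_T.+1 -> S}) \sum_(ac : {ffun 'I_T -> A})
    seg_weight P pil s w st ac * seg_reward r gh st ac.

(* Noise terms (M_0 := 0; M_{n+1} built from the step-(n+1) samples)    *)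

Definition M1 {R : realType} {T0 : Type} {S A : finType} (T : nat)
  (P : S -> A -> S -> R) (gl : R)
  (Ql : nat -> T0 -> SL S T -> A -> R)
  (pih : nat -> T0 -> S -> S -> R)
  (nxt : nat -> SL S T -> A -> T0 -> SL S T)
  (n : nat) (i : SL S T * A) (om : T0) : R :=
  match n with
  | 0 => 0
  | n'.+1 =>
    let: (sl, a) := i in
    gl * maxQ (Ql n' om) (nxt n' sl a om)
    - gl * \sum_(y : SL S T) Pl P (pih n' om) sl a y * maxQ (Ql n' om) y
  end.

Definition M2 {R : realType} {T0 : Type} {S A : finType} (T : nat)
  (P : S -> A -> S -> R) (r : S -> A -> R) (gh : R)
  (Qh : nat -> T0 -> S -> S -> R)
  (pil : nat -> T0 -> SL S T -> A -> R)
  (segS : nat -> S -> S -> T0 -> {ffun 'I_T.+1 -> S})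
  (segA : nat -> S -> S -> T0 -> {ffun 'I_T -> A})
  (n : nat) (i : S * S) (om : T0) : R :=
  match n with
  | 0 => 0
  | n'.+1 =>
    let: (s, w) := i in
    gh ^+ T * maxQ (Qh n' om) (segS n' s w om (inord T))
    - gh ^+ T * \sum_(s' : S) Ph P (pil n' om) s w s' * maxQ (Qh n' om) s'
    + seg_reward r gh (segS n' s w om) (segA n' s w om)
    - rh P r gh (pil n' om) s w
  end.

Definition gen_sigma {R : realType} {d} {T0 : measurableType d} {I : Type}
  (X : I -> T0 -> R) : set (set T0) :=
  <<s [set E | exists i B, measurable B /\ E = X i @^-1` B] >>.

Definition meas_wrt {R : realType} {T0 : Type} (G : set (set T0))
  (X : T0 -> R) : Prop :=
  forall B : set R, measurable B -> G (X @^-1` B).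

(* iterates x_n = vec(Q^{l,n}) and y_n = vec(Q^{h,n}) as a family of
   components indexed by (S^l x A) + (S x Omega) *)
Definition xy_comp {R : realType} {T0 : Type} {S A : finType} {T : nat}
  (Ql : T0 -> SL S T -> A -> R) (Qh : T0 -> S -> S -> R)
  (i : (SL S T * A) + (S * S)) (om : T0) : R :=
  match i with
  | inl (sl, a) => Ql om sl a
  | inr (s, w) => Qh om s w
  end.

Definition filtF {R : realType} {d} {T0 : measurableType d} {S A : finType}
  {T : nat}
  (Ql : nat -> T0 -> SL S T -> A -> R) (Qh : nat -> T0 -> S -> S -> R)
  (M1n : nat -> SL S T * A -> T0 -> R) (M2n : nat -> S * S -> T0 -> R)
  (n : nat) : set (set T0) :=
  gen_sigma (fun (j : 'I_n.+1 * (((SL S T * A) + (S * S)) +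
                                  ((SL S T * A) + (S * S)))) =>
    match j.2 with
    | inl i => xy_comp (Ql j.1) (Qh j.1) i
    | inr (inl i) => M1n j.1 i
    | inr (inr i) => M2n j.1 i
    end).

(* E[X | G] = 0 (X integrable, int_B X dP = 0 for all B in G) *)
Definition cond_mean_zero {R : realType} {d} {T0 : measurableType d}
  (Pr : probability T0 R) (G : set (set T0)) (X : T0 -> R) : Prop :=
  Pr.-integrable setT (fun om => (X om)%:E) /\
  forall B, G B -> (\int[Pr]_(om in B) (X om)%:E = 0)%E.

Definition mart_diff {R : realType} {d} {T0 : measurableType d}
  (Pr : probability T0 R) (F : nat -> set (set T0)) (M : nat -> T0 -> R)
  : Prop :=
  forall n, meas_wrt (F n) (M n) /\ cond_mean_zero Pr (F n) (M n.+1).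

(* E[ X | G ] <= E[ Y | G ] for nonnegative X, Y, i.e.
   int_B X dP <= int_B Y dP for every B in G *)
Definition cond_le {R : realType} {d} {T0 : measurableType d}
  (Pr : probability T0 R) (G : set (set T0)) (X Y : T0 -> R) : Prop :=
  forall B, G B ->
    (\int[Pr]_(om in B) (X om)%:E <= \int[Pr]_(om in B) (Y om)%:E)%E.

(* Main.v *)
Require Import Defs.
From HB Require Import structures.
From mathcomp Require Import all_boot all_order all_algebra.
From mathcomp Require Import all_classical all_reals all_analysis.
Import Order.TTheory GRing.Theory Num.Theory.
Local Open Scope classical_set_scope.
Local Open Scope ring_scope.
From mathcomp Require Import measurable_realfun.
Import HBNNSimple.
Section MW.
Context {R : realType} {d : measure_display} {T0 : measurableType d}.
Variable H : set (set T0).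
Hypothesis hH : sigma_algebra setT H.
Local Notation HT := (g_sigma_algebraType H).
Local Notation MW := (@meas_wrt R T0 H).

Lemma mHE' (C : set T0) : measurable (C : set HT) = H C.
Proof. by rewrite /measurable/= sigma_algebra_id. Qed.

Lemma mwP (f : T0 -> R) : MW f <-> measurable_fun setT (f : HT -> R).
Proof.
split=> [mf _ B mB|mf B mB]; first by rewrite setTI mHE'; exact: mf.
by rewrite -mHE' -(setTI (f @^-1` B)); exact: mf.
Qed.

Lemma mw_cst (c : R) : MW (fun _ => c).
Proof. by apply/mwP; exact: measurable_cst. Qed.

Lemma mw_add f g : MW f -> MW g -> MW (fun x => f x + g x).
Proof. by move=> /mwP mf /mwP mg; apply/mwP; exact: measurable_funD. Qed.

Lemma mw_sub f g : MW f -> MW g -> MW (fun x => f x - g x).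
Proof. by move=> /mwP mf /mwP mg; apply/mwP; exact: measurable_funB. Qed.

Lemma mw_mul f g : MW f -> MW g -> MW (fun x => f x * g x).
Proof. by move=> /mwP mf /mwP mg; apply/mwP; exact: measurable_funM. Qed.

Lemma mw_max f g : MW f -> MW g -> MW (fun x => Num.max (f x) (g x)).
Proof. by move=> /mwP mf /mwP mg; apply/mwP; exact: measurable_maxr. Qed.

Lemma mw_ind (b : T0 -> bool) : H [set x | b x] -> MW (fun x => (b x)%:R).
Proof.
move=> hb; apply/mwP.
have -> : (fun x => (b x)%:R) = (\1_[set x | b x] : HT -> R).
  by apply/funext => x; rewrite indicE; congr (GRing.natmul 1 (nat_of_bool _)); apply/idP/idP; rewrite inE.
by apply: measurable_indic; rewrite mHE'.
Qed.

Lemma mw_sum {I : Type} (s : seq I) (P : pred I) (F : I -> T0 -> R) :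
  (forall i, MW (F i)) -> MW (fun x => \sum_(i <- s | P i) F i x).
Proof.
move=> mF; elim: s => [|i s IH].
  by under eq_fun do rewrite big_nil; exact: mw_cst.
under eq_fun do rewrite big_cons.
case: (P i) => //; exact: mw_add.
Qed.

Lemma mw_prod {I : Type} (s : seq I) (P : pred I) (F : I -> T0 -> R) :
  (forall i, MW (F i)) -> MW (fun x => \prod_(i <- s | P i) F i x).
Proof.
move=> mF; elim: s => [|i s IH].
  by under eq_fun do rewrite big_nil; exact: mw_cst.
under eq_fun do rewrite big_cons.
case: (P i) => //; exact: mw_mul.
Qed.

Lemma mw_bigmax {I : Type} (s : seq I) (P : pred I) (F : I -> T0 -> R) (g : T0 -> R) :
  MW g -> (forall i, MW (F i)) ->
  MW (fun x => \big[Num.max/g x]_(i <- s | P i) F i x).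
Proof.
move=> mg mF; elim: s => [|i s IH].
  by under eq_fun do rewrite big_nil.
under eq_fun do rewrite big_cons.
case: (P i) => //; exact: mw_max.
Qed.

Lemma mw_maxQ {X B : finType} (Q : T0 -> X -> B -> R) (x : X) :
  (forall b, MW (fun om => Q om x b)) -> MW (fun om => maxQ (Q om) x).
Proof.
move=> mQ; rewrite /maxQ; case: (enum B) => [|b _]; first exact: mw_cst.
exact: mw_bigmax.
Qed.

Lemma mw_T0 (hHm : H `<=` measurable) f : MW f -> measurable_fun setT f.
Proof. by move=> mf _ B mB; rewrite setTI; apply: hHm; exact: mf. Qed.

End MW.

Lemma mw_sub_sigma {T0 : Type} {R : realType} (H H' : set (set T0)) (f : T0 -> R) :
  H `<=` H' -> meas_wrt H f -> meas_wrt H' f.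
Proof. by move=> HH mf B mB; apply: HH; exact: mf. Qed.

Lemma gen_sigma_sub {R : realType} {d} {T0 : measurableType d} {I : Type}
  (X : I -> T0 -> R) (H : set (set T0)) : sigma_algebra setT H ->
  (forall i, meas_wrt H (X i)) -> gen_sigma X `<=` H.
Proof.
move=> hH mX; apply: smallest_sub => //.
by move=> E [i [B [mB ->]]]; exact: mX.
Qed.
Section KL.
Context {R : realType} {d : measure_display} {T0 : measurableType d}.
Variable (Pr : probability T0 R).
Variable H : set (set T0).
Hypothesis hH : sigma_algebra setT H.
Hypothesis hHm : H `<=` measurable.
Local Notation HT := (g_sigma_algebraType H).

Lemma mHE (C : set T0) : measurable (C : set HT) = H C.
Proof. by rewrite /measurable/= sigma_algebra_id. Qed.

Lemma HT_T0 (f : T0 -> R) : measurable_fun setT (f : HT -> R) -> measurable_fun setT f.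
Proof.
move=> mf _ B mB; apply: hHm; rewrite -mHE; exact: mf.
Qed.

Lemma HT_T0E (f : T0 -> \bar R) : measurable_fun setT (f : HT -> \bar R) -> measurable_fun setT f.
Proof.
move=> mf _ B mB; apply: hHm; rewrite -mHE; exact: mf.
Qed.

Variables (h1 h2 : T0 -> R).
Hypothesis mh1 : measurable_fun setT h1.
Hypothesis mh2 : measurable_fun setT h2.
Hypothesis h10 : forall x, 0 <= h1 x.
Hypothesis h20 : forall x, 0 <= h2 x.
Hypothesis hh : forall C, H C ->
  (\int[Pr]_(x in C) (h1 x)%:E = \int[Pr]_(x in C) (h2 x)%:E)%E.
Variable B : set T0.
Hypothesis HB : H B.

Let mB : measurable B. Proof. exact: hHm. Qed.

Let stepA (h : T0 -> R) C : (\int[Pr]_(x in B) (h x * \1_C x)%:E =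
   \int[Pr]_(x in B `&` C) (h x)%:E)%E.
Proof.
rewrite [LHS]integral_mkcond [RHS]integral_mkcond; apply: eq_integral => x _.
rewrite !patchE indicE in_setI.
by case: (x \in B); case: (x \in C); rewrite /= ?mulr1 ?mulr0.
Qed.

Let stepB (s : {nnsfun HT >-> R}) :
  (\int[Pr]_(x in B) (h1 x * (s : HT -> R) x)%:E = \int[Pr]_(x in B) (h2 x * (s : HT -> R) x)%:E)%E.
Proof.
have fin := fimfunP s.
have E (h : T0 -> R) : (fun x => (h x * (s : HT -> R) x)%:E) =
   (fun x => \sum_(y <- finmap.enum_fset (fset_set (range s))) (Num.max y 0 * (h x * \1_((s : HT -> R) @^-1` [set y]) x))%:E)%E.
  apply/funext => x; rewrite sumEFin; congr EFin.
  rewrite [in LHS](fimfunE s x) fsbig_finite// mulr_sumr.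
  rewrite big_seq [RHS]big_seq; apply: eq_bigr => y; rewrite in_fset_set// inE => -[z _ <-].
  by rewrite mulrCA (max_l (fun_ge0 _)).
have mpre y : measurable ((s : HT -> R) @^-1` [set y] : set T0).
  by apply: hHm; rewrite -mHE; exact: measurable_funPTI.
have K (h : T0 -> R) : measurable_fun setT h -> (forall x, 0 <= h x) ->
    (\int[Pr]_(x in B) (h x * (s : HT -> R) x)%:E =
     \sum_(y <- finmap.enum_fset (fset_set (range s))) (Num.max y 0)%:E * \int[Pr]_(x in B `&` (s : HT -> R) @^-1` [set y]) (h x)%:E)%E.
  move=> mh h0; rewrite E ge0_integral_sum//; last 2 first.
  - move=> y; apply/measurable_EFinP; apply: measurable_funM => //.
    apply: measurable_funM; first exact: measurable_funTS.
    exact: measurable_indic.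
  - move=> y x _; rewrite lee_fin.
    by rewrite mulr_ge0 ?le_max ?lexx ?orbT// mulr_ge0// indicE.
  rewrite big_seq [RHS]big_seq; apply: eq_bigr => y; rewrite in_fset_set// inE => -[z _ <-].
  under eq_integral do rewrite EFinM.
  rewrite ge0_integralZl_EFin// ?le_max ?lexx ?orbT//.
  - by rewrite stepA.
  - by move=> x _; rewrite lee_fin mulr_ge0.
  - apply/measurable_EFinP; apply: measurable_funM; first exact: measurable_funTS.
    exact: measurable_indic.
rewrite !K//; rewrite big_seq [RHS]big_seq; apply: eq_bigr => y _.
rewrite hh//; rewrite -mHE; apply: measurableI; first by rewrite mHE.
exact: measurable_funPTI.
Qed.

Lemma KL0 (f : T0 -> R) (f0 : forall x, 0 <= f x)
  (mf : measurable_fun setT (f : HT -> R)) :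
  (\int[Pr]_(x in B) (h1 x * f x)%:E = \int[Pr]_(x in B) (h2 x * f x)%:E)%E.
Proof.
have mfE : measurable_fun setT (EFin \o f : HT -> \bar R) by exact/measurable_EFinP.
pose g := nnsfun_approx measurableT mfE.
have C (h : T0 -> R) : measurable_fun setT h -> (forall x, 0 <= h x) ->
   (\int[Pr]_(x in B) (h x * f x)%:E =
    limn (fun n => \int[Pr]_(x in B) (h x * (g n : HT -> R) x)%:E))%E.
  move=> mh h0.
  rewrite -monotone_convergence//; last 3 first.
  - move=> n; apply/measurable_EFinP; apply: measurable_funM; first exact: measurable_funTS.
    apply: measurable_funTS; apply: HT_T0; exact: measurable_funP.
  - by move=> n x _; rewrite lee_fin mulr_ge0.
  - move=> x _ m n mn; rewrite lee_fin ler_wpM2l//.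
    by move: (nd_nnsfun_approx measurableT mfE mn) => /lefP; exact.
  apply: eq_integral => x _; apply/esym/cvg_lim => //.
  under eq_fun do rewrite EFinM.
  rewrite EFinM; apply: cvgeZl => //.
  by apply: (cvg_nnsfun_approx measurableT mfE) => // y _; rewrite lee_fin.
rewrite !C//; congr (limn _); apply/funext => n; exact: stepB.
Qed.

Let intB (h g F : T0 -> R) : measurable_fun setT h ->
  (forall x, 0 <= h x <= 1) -> measurable_fun setT g ->
  (forall x, `|g x| <= `|F x|) -> Pr.-integrable setT (EFin \o F) ->
  Pr.-integrable B (fun x => (h x * g x)%:E).
Proof.
move=> mh h01 mg gF FI.
apply: (le_integrable mB _ _ (integrableS measurableT mB (subsetT B) FI)).
  by apply/measurable_EFinP; apply: measurable_funM; exact: measurable_funTS.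
move=> x _; rewrite /= lee_fin normrM (le_trans _ (gF x))//.
have /andP[h0 hx1] := h01 x.
by rewrite ler_piMl// ger0_norm.
Qed.

Hypothesis h1le : forall x, h1 x <= 1.
Hypothesis h2le : forall x, h2 x <= 1.

Lemma KL (f : T0 -> R) (mf : measurable_fun setT (f : HT -> R))
  (fi : Pr.-integrable setT (EFin \o f)) :
  (\int[Pr]_(x in B) ((h1 x - h2 x) * f x)%:E = 0)%E.
Proof.
pose fp := f \max (cst 0). pose fn := (\- f) \max (cst 0).
have mfp : measurable_fun setT (fp : HT -> R).
  by apply: measurable_maxr => //; exact: measurable_cst.
have mfn : measurable_fun setT (fn : HT -> R).
  by apply: measurable_maxr; [exact: measurable_funN|exact: measurable_cst].
have fp0 x : 0 <= fp x by rewrite /fp /= le_max lexx orbT.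
have fn0 x : 0 <= fn x by rewrite /fn /= le_max lexx orbT.
have fpn x : f x = fp x - fn x.
  rewrite /fp /fn /=; have [fx0|fx0] := leP 0 (f x).
    by rewrite max_r ?subr0// lerNl oppr0.
  by rewrite max_l ?opprK ?add0r// oppr_ge0 ltW.
have bp x : `|fp x| <= `|f x|.
  rewrite /fp /=; have [fx0|fx0] := leP 0 (f x); first by rewrite ?max_l.
  by rewrite normr0.
have bn x : `|fn x| <= `|f x|.
  rewrite /fn /=; have [fx0|fx0] := leP 0 (- f x); first by rewrite ?max_l ?normrN.
  by rewrite normr0.
have h01 x : 0 <= h1 x <= 1 by rewrite h10 h1le.
have h02 x : 0 <= h2 x <= 1 by rewrite h20 h2le.
have mfpT := HT_T0 _ mfp. have mfnT := HT_T0 _ mfn. have mfT := HT_T0 _ mf.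
have split (h : T0 -> R) : measurable_fun setT h -> (forall x, 0 <= h x <= 1) ->
  (\int[Pr]_(x in B) (h x * f x)%:E =
   \int[Pr]_(x in B) (h x * fp x)%:E - \int[Pr]_(x in B) (h x * fn x)%:E)%E.
  move=> mh hb; rewrite -integralB//; last first.
  - by apply: intB => //.
  - by apply: intB => //.
  by apply: eq_integral => x _; rewrite -EFinB -mulrBr -fpn.
under eq_integral do rewrite mulrBl EFinB.
rewrite integralB//; last first.
- by apply: intB => //.
- by apply: intB => //.
rewrite split// (KL0 _ fp0 mfp) (KL0 _ fn0 mfn) -split// subee//.
apply: integrable_fin_num => //.
by apply: intB => //.
Qed.

End KL.

Section GEN.
Context {R : realType} {d : measure_display} {T0 : measurableType d}.
Variable (Pr : probability T0 R).
Variable H : set (set T0).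
Hypothesis hH : sigma_algebra setT H.
Hypothesis hHm : H `<=` measurable.
Variables (K : finType) (e : K -> T0 -> bool) (h f : K -> T0 -> R).
Hypothesis hEm : forall k, measurable [set om | e k om].
Hypothesis hL : forall k C, H C ->
  Pr (C `&` [set om | e k om]) = (\int[Pr]_(x in C) (h k x)%:E)%E.
Hypothesis mh : forall k, @meas_wrt R T0 H (h k).
Hypothesis h01 : forall k x, 0 <= h k x <= 1.
Hypothesis mf : forall k, @meas_wrt R T0 H (f k).
Hypothesis fi : forall k, Pr.-integrable setT (fun x => (f k x)%:E).

Let ind k : (fun x => (e k x)%:R) = (\1_[set om | e k om] : T0 -> R).
Proof.
by apply/funext => x; rewrite indicE; congr (GRing.natmul 1 (nat_of_bool _)); apply/idP/idP; rewrite inE.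
Qed.

Let mind k : measurable_fun setT (fun x => (e k x)%:R : R).
Proof. by rewrite ind; exact: measurable_indic. Qed.

Let term_int k D : measurable D ->
  Pr.-integrable D (fun x => (((e k x)%:R - h k x) * f k x)%:E).
Proof.
move=> mD; apply: (le_integrable mD _ _ (integrableS measurableT mD (subsetT D) (fi k))).
  apply/measurable_EFinP; apply: measurable_funTS; apply: measurable_funM.
    apply: measurable_funB => //. exact: (mw_T0 _ hHm _ (mh k)).
  exact: (mw_T0 _ hHm _ (mf k)).
move=> x _; rewrite lee_fin normrM ler_piMl//.
have /andP[h0 h1] := h01 k x.
case: (e k x); rewrite /=.
  by rewrite ger0_norm ?subr_ge0// lerBlDr lerDl.
by rewrite sub0r normrN ger0_norm.
Qed.

Lemma GEN_int : Pr.-integrable setT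
  (fun x => (\sum_(k : K) ((e k x)%:R - h k x) * f k x)%:E).
Proof.
under eq_fun do rewrite -sumEFin.
by apply: integrable_sum => // k _; apply: term_int.
Qed.

Lemma GEN_zero B : H B ->
  (\int[Pr]_(x in B) (\sum_(k : K) ((e k x)%:R - h k x) * f k x)%:E = 0)%E.
Proof.
move=> HB; have mB : measurable B by exact: hHm.
under eq_integral do rewrite -sumEFin.
rewrite integral_sum//; last by move=> k; apply: term_int.
apply: big1 => k _.
apply: (@KL _ _ _ Pr H hH hHm) => //.
- exact: (mw_T0 _ hHm _ (mh k)).
- by move=> x; have /andP[] := h01 k x.
- move=> C HC.
  transitivity (\int[Pr]_(x in C) (\1_[set om | e k om] x)%:E)%E.
    by apply: eq_integral => x _; rewrite -ind.
  rewrite integral_indic; last 2 first.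
  + exact: hHm.
  + exact: hEm.
  by rewrite setIC; exact: hL.
- by move=> x; case: (e k x).
- by move=> x; have /andP[] := h01 k x.
- by apply/(mwP H hH).
- exact: (fi k).
Qed.


End GEN.

From mathcomp Require Import lra.

Section SB.
Context {R : realType} {T0 : Type} (V : T0 -> R).
Hypothesis V1 : forall x, 1 <= V x.

Definition SB (q : T0 -> R) := exists c, 0 <= c /\ forall x, q x ^+ 2 <= c * V x.
Definition LB (q : T0 -> R) := exists c, 0 <= c /\ forall x, q x <= c * V x.

Lemma SB_cst k : SB (fun _ => k).
Proof. exists (k ^+ 2); split; first exact: sqr_ge0. move=> x; have := V1 x; nra. Qed.

Lemma SB_add q1 q2 : SB q1 -> SB q2 -> SB (fun x => q1 x + q2 x).
Proof.
move=> [c1 [c10 h1]] [c2 [c20 h2]]; exists (2 * c1 + 2 * c2); split; first lra.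
move=> x; have := h1 x; have := h2 x; have := sqr_ge0 (q1 x - q2 x); nra.
Qed.

Lemma SB_scale k q : SB q -> SB (fun x => k * q x).
Proof.
move=> [c [c0 h]]; exists (k ^+ 2 * c); split; first by rewrite mulr_ge0 ?sqr_ge0.
move=> x; rewrite exprMn -[k ^+ 2 * c * V x]mulrA; apply: ler_wpM2l; [exact: sqr_ge0|exact: h].
Qed.

Lemma SB_mulb p q : (forall x, `|p x| <= 1) -> SB q -> SB (fun x => p x * q x).
Proof.
move=> hp [c [c0 h]]; exists c; split => // x.
have := h x; have := hp x; rewrite exprMn.
have : p x ^+ 2 <= 1 by rewrite -real_normK ?num_real// expr_le1// normr_ge0.
have := sqr_ge0 (q x); nra.
Qed.

Lemma SB_sum {I : Type} (s : seq I) (P : pred I) (F : I -> T0 -> R) :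
  (forall i, SB (F i)) -> SB (fun x => \sum_(i <- s | P i) F i x).
Proof.
move=> hF; elim: s => [|i s IH].
  by under eq_fun do rewrite big_nil; exact: SB_cst.
under eq_fun do rewrite big_cons.
case: (P i) => //; exact: SB_add.
Qed.

Lemma SB_le q g : (forall x, q x ^+ 2 <= g x) -> (forall x, g x <= V x) -> SB q.
Proof. by move=> h1 h2; exists 1; split => // x; rewrite mul1r (le_trans (h1 x)). Qed.

Lemma LB_sum {I : Type} (s : seq I) (P : pred I) (F : I -> T0 -> R) :
  (forall i, LB (F i)) -> LB (fun x => \sum_(i <- s | P i) F i x).
Proof.
move=> hF; elim: s => [|i s IH].
  by exists 0; split => // x; rewrite big_nil mul0r.
under eq_fun do rewrite big_cons.
case: (P i) => //; move: IH => [c2 [c20 h2]]; have [c1 [c10 h1]] := hF i.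
exists (c1 + c2); split; first lra.
move=> x; have := h1 x; have := h2 x; rewrite mulrDl; lra.
Qed.

Lemma LB_sq q : SB q -> LB (fun x => q x ^+ 2).
Proof. by []. Qed.

End SB.

Lemma maxQ_sq {R : realType} {X B : finType} (Q : X -> B -> R) (x : X) :
  maxQ Q x ^+ 2 <= \sum_(b : B) Q x b ^+ 2.
Proof.
have sq_le b : Q x b ^+ 2 <= \sum_(b' : B) Q x b' ^+ 2.
  rewrite (bigD1 b) //= lerDl; apply: sumr_ge0 => *; exact: sqr_ge0.
rewrite /maxQ; case: (enum B) => [|b0 _].
  by rewrite expr0n /=; apply: sumr_ge0 => *; exact: sqr_ge0.
have [b ->] : exists b, \big[Num.max/Q x b0]_(b' : B) Q x b' = Q x b.
  apply: (big_ind (fun v => exists b, v = Q x b)); first by exists b0.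
    move=> u v [b1 ->] [b2 ->]; case: (leP (Q x b1) (Q x b2)) => _.
      by exists b2.
    by exists b1.
  by move=> b _; exists b.
exact: sq_le.
Qed.

Lemma sq_le_sum2 {R : realType} {X B : finType} (Q : X -> B -> R) (x : X) :
  \sum_(b' : B) Q x b' ^+ 2 <= \sum_(x' : X) \sum_(b' : B) Q x' b' ^+ 2.
Proof.
rewrite (bigD1 x) //= lerDl; apply: sumr_ge0 => *; apply: sumr_ge0 => *; exact: sqr_ge0.
Qed.
Lemma sum_ind {R : realType} {K : finType} (x : K) (F : K -> R) :
  \sum_(y : K) (x == y)%:R * F y = F x.
Proof.
rewrite (bigD1 x) //= eqxx mul1r big1 ?addr0 // => y /negbTE.
by rewrite eq_sym => ->; rewrite mul0r.
Qed.

Lemma maxQ_abs {R : realType} {X B : finType} (Q : X -> B -> R) (x : X) :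
  `|maxQ Q x| <= \sum_(b : B) `|Q x b|.
Proof.
have le b : `|Q x b| <= \sum_(b' : B) `|Q x b'|.
  rewrite (bigD1 b) //= lerDl; apply: sumr_ge0 => *; exact: normr_ge0.
rewrite /maxQ; case: (enum B) => [|b0 _].
  by rewrite normr0; apply: sumr_ge0 => *; exact: normr_ge0.
have [b ->] : exists b, \big[Num.max/Q x b0]_(b' : B) Q x b' = Q x b.
  apply: (big_ind (fun v => exists b, v = Q x b)); first by exists b0.
    move=> u v [b1 ->] [b2 ->]; case: (leP (Q x b1) (Q x b2)) => _.
      by exists b2.
    by exists b1.
  by move=> b _; exists b.
exact: le.
Qed.

Lemma le1_sum {R : realType} {K : finType} (F : K -> R) (k : K) :
  (forall k, 0 <= F k) -> \sum_(k : K) F k = 1 -> F k <= 1.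
Proof.
move=> F0 F1; rewrite -F1 (bigD1 k) //= lerDl; exact: sumr_ge0.
Qed.

Lemma mul01 {R : realType} (a b : R) : 0 <= a <= 1 -> 0 <= b <= 1 -> 0 <= a * b <= 1.
Proof.
move=> /andP[a0 a1] /andP[b0 b1]; rewrite mulr_ge0 //=; exact: mulr_ile1.
Qed.

Lemma nat01 {R : realType} (b : bool) : 0 <= (b%:R : R) <= 1.
Proof. by case: b; rewrite /= ?lexx ?ler01. Qed.

Lemma Pl_01 {R : realType} {S A : finType} (T : nat) (P : S -> A -> S -> R)
  (pih : S -> S -> R) :
  (forall s a s', 0 <= P s a s' <= 1) -> (forall s w, 0 <= pih s w <= 1) ->
  forall (sl : SL S T) a y, 0 <= Pl P pih sl a y <= 1.
Proof.
move=> hP hpih [[s w] dd] a [[s' w'] d']; rewrite /Pl /Pde.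
apply: mul01; first by apply: mul01; [exact: nat01|exact: hP].
by case: (_ != _); [exact: nat01|exact: hpih].
Qed.

Lemma sw_01 {R : realType} {S A : finType} (T : nat) (P : S -> A -> S -> R)
  (pil : SL S T -> A -> R) :
  (forall s a s', 0 <= P s a s' <= 1) -> (forall sl a, 0 <= pil sl a <= 1) ->
  forall s w st ac, 0 <= seg_weight P pil s w st ac <= 1.
Proof.
move=> hP hpil s w st ac; rewrite /seg_weight; apply: mul01; first exact: nat01.
apply: (big_ind (fun v => 0 <= v <= 1)); first by rewrite ler01 lexx.
  exact: mul01.
by move=> i _; apply: mul01.
Qed.

Lemma mw_Pl {R : realType} {d} {T0 : measurableType d} (H : set (set T0))
  (hH : sigma_algebra setT H) {S A : finType} (T : nat) (P : S -> A -> S -> R)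
  (pih : T0 -> S -> S -> R) :
  (forall s w, meas_wrt H (fun om => pih om s w)) ->
  forall (sl : SL S T) a y, meas_wrt H (fun om => Pl P (pih om) sl a y).
Proof.
move=> mpih [[s w] dd] a [[s' w'] d']; rewrite /Pl.
case: (_ != _).
  exact: (mw_cst H hH).
by apply: (mw_mul H hH); [exact: (mw_cst H hH)|exact: mpih].
Qed.

Lemma mw_sw {R : realType} {d} {T0 : measurableType d} (H : set (set T0))
  (hH : sigma_algebra setT H) {S A : finType} (T : nat) (P : S -> A -> S -> R)
  (pil : T0 -> SL S T -> A -> R) :
  (forall sl a, meas_wrt H (fun om => pil om sl a)) ->
  forall s w st ac, meas_wrt H (fun om => seg_weight P (pil om) s w st ac).
Proof.
move=> mpil s w st ac; rewrite /seg_weight.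
apply: (mw_mul H hH); first exact: (mw_cst H hH).
apply: (mw_prod H hH) => // i; apply: (mw_mul H hH); [exact: (mw_cst H hH)|exact: mpil].
Qed.

Lemma set_eqb {T0 : Type} {K : eqType} (g : T0 -> K) y :
  [set om | g om == y] = [set om | g om = y].
Proof. by apply/seteqP; split => om /= /eqP. Qed.

Lemma set_eqp {T0 : Type} {K1 K2 : eqType} (g1 : T0 -> K1) (g2 : T0 -> K2) p :
  [set om | (g1 om, g2 om) == p] = [set om | g1 om = p.1 /\ g2 om = p.2].
Proof.
apply/seteqP; split => om /=; case: p => p1 p2 /=.
  by rewrite xpair_eqE => /andP[/eqP -> /eqP ->].
by case=> -> ->; rewrite eqxx.
Qed.

Lemma int_maxQ {R : realType} {d} {T0 : measurableType d} (Pr : probability T0 R)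
  (H : set (set T0)) (hH : sigma_algebra setT H) (hHm : H `<=` measurable)
  {X B : finType} (Q : T0 -> X -> B -> R) (x : X) :
  (forall b, meas_wrt H (fun om => Q om x b)) ->
  (forall b, Pr.-integrable setT (fun om => (Q om x b)%:E)) ->
  Pr.-integrable setT (fun om => (maxQ (Q om) x)%:E).
Proof.
move=> mQ iQ.
apply: (le_integrable measurableT _ _ (g := fun om => (\sum_(b : B) `|Q om x b|)%:E)).
- apply/measurable_EFinP; apply: (mw_T0 _ hHm); exact: mw_maxQ.
- move=> om _ /=; rewrite lee_fin (le_trans (maxQ_abs _ _))// ger0_norm//.
  by apply: sumr_ge0 => *; exact: normr_ge0.
- under eq_fun do rewrite -sumEFin.
  apply: integrable_sum => // b _.
  exact: (integrable_abse (iQ b)).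
Qed.
Theorem lemma5
  (R : realType) (S A : finType) (T : nat) (hT : (0 < T)%N)
  (* MDP: kernel P(s'|s,a) = P s a s', bounded reward r *)
  (P : S -> A -> S -> R)
  (hP0 : forall s a s', 0 <= P s a s')
  (hP1 : forall s a, \sum_(s' : S) P s a s' = 1)
  (r : S -> A -> R) (rbar : R) (hr : forall s a, `|r s a| <= rbar)
  (gh gl : R) (hgh : 0 < gh < 1) (hgl : 0 < gl < 1)
  (* probability space and the history filtration G_n of the sampling *)
  (d : measure_display) (T0 : measurableType d) (Pr : probability T0 R)
  (G : nat -> set (set T0))
  (hGs : forall n, sigma_algebra setT (G n))
  (hGm : forall n, G n `<=` measurable)
  (hGinc : forall n, G n `<=` G n.+1)
  (* iterates Q^{l,n} (x_n) and Q^{h,n} (y_n): adapted and integrable *)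
  (Ql : nat -> T0 -> SL S T -> A -> R) (Qh : nat -> T0 -> S -> S -> R)
  (hQlG : forall n sl a, meas_wrt (G n) (fun om => Ql n om sl a))
  (hQhG : forall n s w, meas_wrt (G n) (fun om => Qh n om s w))
  (hQli : forall n sl a, Pr.-integrable setT (fun om => (Ql n om sl a)%:E))
  (hQhi : forall n s w, Pr.-integrable setT (fun om => (Qh n om s w)%:E))
  (* policies pi^{h,n}(w|s) = pih n om s w, pi^{l,n}(a|s^l) = pil n om s^l a:
     stochastic and determined by the current iterates (x_n, y_n) *)
  (pih : nat -> T0 -> S -> S -> R) (pil : nat -> T0 -> SL S T -> A -> R)
  (hpih0 : forall n om s w, 0 <= pih n om s w)
  (hpih1 : forall n om s, \sum_(w : S) pih n om s w = 1)
  (hpil0 : forall n om sl a, 0 <= pil n om sl a)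
  (hpil1 : forall n om sl, \sum_(a : A) pil n om sl a = 1)
  (hpihm : forall n s w, meas_wrt (gen_sigma (xy_comp (Ql n) (Qh n)))
                                  (fun om => pih n om s w))
  (hpilm : forall n sl a, meas_wrt (gen_sigma (xy_comp (Ql n) (Qh n)))
                                   (fun om => pil n om sl a))
  (* on-policy samples used at step n+1:
     nxt n s^l a ~ P^l_{pi^{h,n}}(. | s^l, a);
     (segS n s w, segA n s w) = (s_{tT}, ..., s_{(t+1)T}; a_{tT}, ..., a_{tT+T-1}),
     the segment started at s with goal w, low-level policy pi^{l,n} *)
  (nxt : nat -> SL S T -> A -> T0 -> SL S T)
  (segS : nat -> S -> S -> T0 -> {ffun 'I_T.+1 -> S})
  (segA : nat -> S -> S -> T0 -> {ffun 'I_T -> A})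
  (hnxtG : forall n sl a y, G n.+1 [set om | nxt n sl a om = y])
  (hsegG : forall n s w st ac,
      G n.+1 [set om | segS n s w om = st /\ segA n s w om = ac])
  (hnxtL : forall n sl a y B, G n B ->
      (Pr (B `&` [set om | nxt n sl a om = y])
       = \int[Pr]_(om in B) (Pl P (pih n om) sl a y)%:E)%E)
  (hsegL : forall n s w st ac B, G n B ->
      (Pr (B `&` [set om | segS n s w om = st /\ segA n s w om = ac])
       = \int[Pr]_(om in B) (seg_weight P (pil n om) s w st ac)%:E)%E) :
  let M1n := M1 P gl Ql pih nxt in
  let M2n := M2 P r gh Qh pil segS segA in
  let F := filtF Ql Qh M1n M2n in
  let nx2 := fun n om => \sum_(sl : SL S T) \sum_(a : A) (Ql n om sl a) ^+ 2 in
  let ny2 := fun n om => \sum_(s : S) \sum_(w : S) (Qh n om s w) ^+ 2 in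
  (forall i, mart_diff Pr F (fun n => M1n n i)) /\
  (forall i, mart_diff Pr F (fun n => M2n n i)) /\
  exists K1 K2 : R, 0 < K1 /\ 0 < K2 /\
    forall n : nat,
      cond_le Pr (F n) (fun om => \sum_(i : SL S T * A) (M1n n.+1 i om) ^+ 2)
                       (fun om => K1 * (1 + nx2 n om + ny2 n om)) /\
      cond_le Pr (F n) (fun om => \sum_(i : S * S) (M2n n.+1 i om) ^+ 2)
                       (fun om => K2 * (1 + nx2 n om + ny2 n om)).
Proof.
move=> M1n M2n F nx2 ny2.
have hGmono m n : (m <= n)%N -> G m `<=` G n.
  elim: n => [|n IH]; first by rewrite leqn0 => /eqP ->.
  rewrite leq_eqVlt => /orP[/eqP -> //|]; rewrite ltnS => /IH h C /h; exact: hGinc.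
have P01 s a s' : 0 <= P s a s' <= 1.
  by rewrite hP0 /=; apply: (le1_sum (P s a) s') => //; exact: hP0.
have pih01 n om s w : 0 <= pih n om s w <= 1.
  by rewrite hpih0 /=; apply: (le1_sum (pih n om s) w) => //; exact: hpih0.
have pil01 n om sl a : 0 <= pil n om sl a <= 1.
  by rewrite hpil0 /=; apply: (le1_sum (pil n om sl) a) => //; exact: hpil0.
have mxy n : forall i, meas_wrt (G n) (xy_comp (Ql n) (Qh n) i).
  by case=> [[sl a]|[s w]]; [exact: hQlG|exact: hQhG].
have mpih n s w : meas_wrt (G n) (fun om => pih n om s w).
  exact: (mw_sub_sigma _ _ _ (gen_sigma_sub _ _ (hGs n) (mxy n)) (hpihm n s w)).
have mpil n sl a : meas_wrt (G n) (fun om => pil n om sl a).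
  exact: (mw_sub_sigma _ _ _ (gen_sigma_sub _ _ (hGs n) (mxy n)) (hpilm n sl a)).
have dec1 n sl a : M1n n.+1 (sl, a) = fun om => \sum_(y : SL S T)
   ((nxt n sl a om == y)%:R - Pl P (pih n om) sl a y) * (gl * maxQ (Ql n om) y).
  apply/funext => om; rewrite /M1n /=; symmetry.
  under eq_bigr do rewrite mulrBl.
  rewrite sumrB sum_ind; congr (_ - _); rewrite mulr_sumr; apply: eq_bigr => y _.
  by rewrite mulrCA.
have dec2 n s w : M2n n.+1 (s, w) = fun om =>
   \sum_(p : {ffun 'I_T.+1 -> S} * {ffun 'I_T -> A})
   (((segS n s w om, segA n s w om) == p)%:R - seg_weight P (pil n om) s w p.1 p.2) *
   (gh ^+ T * maxQ (Qh n om) (p.1 (inord T)) + seg_reward r gh p.1 p.2).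
  apply/funext => om; rewrite /M2n /=; symmetry.
  under eq_bigr do rewrite mulrBl.
  rewrite sumrB sum_ind /=.
  set mq := fun s' => maxQ (Qh n om) s'.
  set wt := seg_weight P (pil n om) s w.
  have E1 : \sum_(s' : S) Ph P (pil n om) s w s' * mq s' =
      \sum_(p : {ffun 'I_T.+1 -> S} * {ffun 'I_T -> A}) wt p.1 p.2 * mq (p.1 (inord T)).
    rewrite -(pair_bigA _ (fun st ac => wt st ac * mq (st (inord T)))) /=.
    transitivity (\sum_(s' : S) \sum_(st : {ffun 'I_T.+1 -> S}) \sum_(ac : {ffun 'I_T -> A})
       wt st ac * ((st (inord T) == s')%:R * mq s')).
      apply: eq_bigr => s' _; rewrite /Ph mulr_suml; apply: eq_bigr => st _.
      by rewrite mulr_suml; apply: eq_bigr => ac _; rewrite mulrA.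
    rewrite exchange_big; apply: eq_bigr => st _; rewrite exchange_big.
    by apply: eq_bigr => ac _; rewrite -mulr_sumr sum_ind.
  have E2 : rh P r gh (pil n om) s w =
      \sum_(p : {ffun 'I_T.+1 -> S} * {ffun 'I_T -> A}) wt p.1 p.2 * seg_reward r gh p.1 p.2.
    by rewrite /rh -(pair_bigA _ (fun st ac => wt st ac * seg_reward r gh st ac)).
  rewrite E1 E2.
  under [X in _ - X = _]eq_bigr do rewrite mulrDr mulrCA.
  rewrite big_split /= -mulr_sumr.
  lra.
have mPl n (sl : SL S T) a y : meas_wrt (G n) (fun om => Pl P (pih n om) sl a y).
  exact: (mw_Pl _ (hGs n) T P (pih n) (mpih n)).
have mSW n s w st ac : meas_wrt (G n) (fun om => seg_weight P (pil n om) s w st ac).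
  exact: (mw_sw _ (hGs n) T P (pil n) (mpil n)).
have Pl01 n om (sl : SL S T) a y : 0 <= Pl P (pih n om) sl a y <= 1.
  by apply: Pl_01 => //; exact: pih01.
have SW01 n om s w st ac : 0 <= seg_weight P (pil n om) s w st ac <= 1.
  by apply: sw_01 => //; exact: pil01.
have mmq1 n y : meas_wrt (G n) (fun om => gl * maxQ (Ql n om) y).
  apply: (mw_mul _ (hGs n)); first exact: (mw_cst _ (hGs n)).
  by apply: (mw_maxQ _ (hGs n)) => b; exact: hQlG.
have imq1 n y : Pr.-integrable setT (fun om => (gl * maxQ (Ql n om) y)%:E).
  under eq_fun do rewrite EFinM.
  apply: integrableZl => //; apply: (int_maxQ Pr _ (hGs n) (hGm n)) => b.
    exact: hQlG.
  exact: hQli.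
have mmq2 n (p : {ffun 'I_T.+1 -> S} * {ffun 'I_T -> A}) :
    meas_wrt (G n) (fun om => gh ^+ T * maxQ (Qh n om) (p.1 (inord T)) + seg_reward r gh p.1 p.2).
  apply: (mw_add _ (hGs n)); last exact: (mw_cst _ (hGs n)).
  apply: (mw_mul _ (hGs n)); first exact: (mw_cst _ (hGs n)).
  by apply: (mw_maxQ _ (hGs n)) => b; exact: hQhG.
have imq2 n (p : {ffun 'I_T.+1 -> S} * {ffun 'I_T -> A}) :
    Pr.-integrable setT (fun om => (gh ^+ T * maxQ (Qh n om) (p.1 (inord T)) + seg_reward r gh p.1 p.2)%:E).
  under eq_fun do rewrite EFinD.
  apply: integrableD => //.
    under eq_fun do rewrite EFinM.
    apply: integrableZl => //; apply: (int_maxQ Pr _ (hGs n) (hGm n)) => b.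
      exact: hQhG.
    exact: hQhi.
  exact: finite_measure_integrable_cst.
have GE1 n sl a : Pr.-integrable setT (fun om => (M1n n.+1 (sl, a) om)%:E) /\
    (forall B, G n B -> (\int[Pr]_(om in B) (M1n n.+1 (sl, a) om)%:E = 0)%E).
  rewrite dec1; split.
    apply: (GEN_int Pr (G n) (hGm n)) => //.
    by move=> y; rewrite set_eqb; apply: hGm; exact: hnxtG.
  move=> B HB; apply: (GEN_zero Pr (G n) (hGs n) (hGm n)) => //.
  - by move=> y; rewrite set_eqb; apply: hGm; exact: hnxtG.
  - by move=> y C HC; rewrite set_eqb; exact: hnxtL.
have GE2 n s w : Pr.-integrable setT (fun om => (M2n n.+1 (s, w) om)%:E) /\
    (forall B, G n B -> (\int[Pr]_(om in B) (M2n n.+1 (s, w) om)%:E = 0)%E).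
  rewrite dec2; split.
    apply: (GEN_int Pr (G n) (hGm n)) => //.
    by move=> p; rewrite set_eqp; apply: hGm; exact: hsegG.
  move=> B HB; apply: (GEN_zero Pr (G n) (hGs n) (hGm n)) => //.
  - by move=> p; rewrite set_eqp; apply: hGm; exact: hsegG.
  - by move=> p C HC; rewrite set_eqp; exact: hsegL.
have mwM1 n sl a : meas_wrt (G n.+1) (M1n n.+1 (sl, a)).
  rewrite dec1; apply: (mw_sum _ (hGs n.+1)) => y; apply: (mw_mul _ (hGs n.+1)).
    apply: (mw_sub _ (hGs n.+1)).
      by apply: (mw_ind _ (hGs n.+1)); rewrite set_eqb; exact: hnxtG.
    exact: (mw_sub_sigma _ _ _ (hGinc n) (mPl n sl a y)).
  exact: (mw_sub_sigma _ _ _ (hGinc n) (mmq1 n y)).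
have mwM2 n s w : meas_wrt (G n.+1) (M2n n.+1 (s, w)).
  rewrite dec2; apply: (mw_sum _ (hGs n.+1)) => p; apply: (mw_mul _ (hGs n.+1)).
    apply: (mw_sub _ (hGs n.+1)).
      by apply: (mw_ind _ (hGs n.+1)); rewrite set_eqp; exact: hsegG.
    exact: (mw_sub_sigma _ _ _ (hGinc n) (mSW n s w p.1 p.2)).
  exact: (mw_sub_sigma _ _ _ (hGinc n) (mmq2 n p)).
have FsubG n : F n `<=` G n.
  rewrite /F /filtF; apply: (gen_sigma_sub _ _ (hGs n)) => -[m j] /=.
  have hm : (m <= n)%N by rewrite -ltnS.
  case: j => [i|[i|i]].
  - exact: (mw_sub_sigma _ _ _ (hGmono m n hm) (mxy m i)).
  - move: hm; case: (nat_of_ord m) => [|m'] hm.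
      by rewrite /M1n /=; exact: (mw_cst _ (hGs n)).
    case: i => sl a; exact: (mw_sub_sigma _ _ _ (hGmono _ _ hm) (mwM1 m' sl a)).
  - move: hm; case: (nat_of_ord m) => [|m'] hm.
      by rewrite /M2n /=; exact: (mw_cst _ (hGs n)).
    case: i => s w; exact: (mw_sub_sigma _ _ _ (hGmono _ _ hm) (mwM2 m' s w)).
split.
  move=> [sl a] n; split.
    move=> B mB; apply: sub_gen_smallest.
    by exists (ord_max, inr (inl (sl, a))), B; split.
  split; first exact: (GE1 n sl a).1.
  by move=> B /FsubG HB; exact: (GE1 n sl a).2 B HB.
split.
  move=> [s w] n; split.
    move=> B mB; apply: sub_gen_smallest.
    by exists (ord_max, inr (inr (s, w))), B; split.
  split; first exact: (GE2 n s w).1.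
  by move=> B /FsubG HB; exact: (GE2 n s w).2 B HB.
pose V := fun z : nat * T0 => 1 + nx2 z.1 z.2 + ny2 z.1 z.2.
have nx0 n om : 0 <= nx2 n om.
  by apply: sumr_ge0 => *; apply: sumr_ge0 => *; exact: sqr_ge0.
have ny0 n om : 0 <= ny2 n om.
  by apply: sumr_ge0 => *; apply: sumr_ge0 => *; exact: sqr_ge0.
have V1 z : 1 <= V z.
  by rewrite /V -addrA lerDl addr_ge0.
have nxV z : nx2 z.1 z.2 <= V z.
  by rewrite /V -addrA addrC -addrA lerDl addr_ge0 ?ler01.
have nyV z : ny2 z.1 z.2 <= V z.
  by rewrite /V lerDr addr_ge0 ?ler01.
have b01 (b : bool) (x : R) : 0 <= x <= 1 -> `|b%:R - x| <= 1.
  move=> /andP[h0 h1]; case: b => /=.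
    by rewrite ger0_norm ?subr_ge0// lerBlDr lerDl.
  by rewrite sub0r normrN ger0_norm.
have SBM1 sl a : SB V (fun z => M1n z.1.+1 (sl, a) z.2).
  have -> : (fun z => M1n z.1.+1 (sl, a) z.2) = (fun z => \sum_(y : SL S T)
     ((nxt z.1 sl a z.2 == y)%:R - Pl P (pih z.1 z.2) sl a y) * (gl * maxQ (Ql z.1 z.2) y)).
    by apply/funext => z; rewrite dec1.
  apply: (SB_sum _ V1) => y; apply: SB_mulb.
    by move=> z; apply: b01; exact: Pl01.
  apply: SB_scale; apply: (SB_le _ _ (fun z => nx2 z.1 z.2)) => // z.
  exact: (le_trans (maxQ_sq _ _) (sq_le_sum2 _ _)).
have SBM2 s w : SB V (fun z => M2n z.1.+1 (s, w) z.2).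
  have -> : (fun z => M2n z.1.+1 (s, w) z.2) = (fun z =>
     \sum_(p : {ffun 'I_T.+1 -> S} * {ffun 'I_T -> A})
     (((segS z.1 s w z.2, segA z.1 s w z.2) == p)%:R - seg_weight P (pil z.1 z.2) s w p.1 p.2) *
     (gh ^+ T * maxQ (Qh z.1 z.2) (p.1 (inord T)) + seg_reward r gh p.1 p.2)).
    by apply/funext => z; rewrite dec2.
  apply: (SB_sum _ V1) => p; apply: SB_mulb.
    by move=> z; apply: b01; exact: SW01.
  apply: SB_add; last exact: (SB_cst _ V1).
  apply: SB_scale; apply: (SB_le _ _ (fun z => ny2 z.1 z.2)) => // z.
  exact: (le_trans (maxQ_sq _ _) (sq_le_sum2 _ _)).
have [c1 [c10 hc1]] : LB V (fun z => \sum_(i : SL S T * A) (M1n z.1.+1 i z.2) ^+ 2).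
  by apply: LB_sum => -[sl a]; exact: LB_sq (SBM1 sl a).
have [c2 [c20 hc2]] : LB V (fun z => \sum_(i : S * S) (M2n z.1.+1 i z.2) ^+ 2).
  by apply: LB_sum => -[s w]; exact: LB_sq (SBM2 s w).
have mw_sq H (hH : sigma_algebra setT H) (g : T0 -> R) :
    meas_wrt H g -> meas_wrt H (fun om => g om ^+ 2).
  move=> mg; under eq_fun do rewrite expr2.
  exact: (mw_mul _ hH).
have mnx n : meas_wrt (G n) (nx2 n).
  apply: (mw_sum _ (hGs n)) => sl; apply: (mw_sum _ (hGs n)) => a.
  by apply: (mw_sq _ (hGs n)); exact: hQlG.
have mny n : meas_wrt (G n) (ny2 n).
  apply: (mw_sum _ (hGs n)) => s; apply: (mw_sum _ (hGs n)) => w.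
  by apply: (mw_sq _ (hGs n)); exact: hQhG.
have mV n (K : R) : meas_wrt (G n) (fun om => K * (1 + nx2 n om + ny2 n om)).
  apply: (mw_mul _ (hGs n)); first exact: (mw_cst _ (hGs n)).
  apply: (mw_add _ (hGs n)); last exact: mny.
  by apply: (mw_add _ (hGs n)); [exact: (mw_cst _ (hGs n))|exact: mnx].
have Vpos n om : 0 <= 1 + nx2 n om + ny2 n om by apply: (le_trans ler01); exact: (V1 (n, om)).
exists (c1 + 1), (c2 + 1); split; first lra.
split; first lra.
move=> n; split => B /FsubG HB; have mB : measurable B by exact: (hGm n _ HB).
  apply: ge0_le_integral => //.
  - by move=> om _; rewrite lee_fin; apply: sumr_ge0 => *; exact: sqr_ge0.
  - apply/measurable_EFinP; apply: measurable_funTS; apply: (mw_T0 _ (hGm n.+1)).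
    by apply: (mw_sum _ (hGs n.+1)) => -[sl a]; apply: (mw_sq _ (hGs n.+1)); exact: mwM1.
  - apply/measurable_EFinP; apply: measurable_funTS; apply: (mw_T0 _ (hGm n)).
    exact: mV.
  - move=> om _; rewrite lee_fin; apply: (le_trans (hc1 (n, om))).
    by rewrite /V /= ler_wpM2r ?Vpos// lerDl.
apply: ge0_le_integral => //.
- by move=> om _; rewrite lee_fin; apply: sumr_ge0 => *; exact: sqr_ge0.
- apply/measurable_EFinP; apply: measurable_funTS; apply: (mw_T0 _ (hGm n.+1)).
  by apply: (mw_sum _ (hGs n.+1)) => -[s w]; apply: (mw_sq _ (hGs n.+1)); exact: mwM2.
- apply/measurable_EFinP; apply: measurable_funTS; apply: (mw_T0 _ (hGm n)).
  exact: mV.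
- move=> om _; rewrite lee_fin; apply: (le_trans (hc2 (n, om))).
  by rewrite /V /= ler_wpM2r ?Vpos// lerDl.
Qed.
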